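(* Let $\Lambda\subset\mathbb{R}^d$ be the closure of an open connected set with piecewise smooth boundary, let $F:\mathbb{R}^d\to\mathbb{R}^d$ and $v:\Lambda\to\mathbb{R}^d$ be such that for each $x\in\Lambda$ the problem $$\frac{d^2y(t,x)}{dt^2}=F(y(t,x)),\quad y(0,x)=x,\quad\frac{dy(0,x)}{dt}=v(x)$$ has a unique solution for all $t\in[0,\infty)$. Assume that $(F(y)-F(x),y-x)\ge0$ for all $x,y\in\mathbb{R}^d$ and $(v(x_2)-v(x_1),x_2-x_1)\ge0$ for all $x_1,x_2\in\Lambda$. Then there are no collisions on $[0,\infty)$: $y(t,x_1)\ne y(t,x_2)$ for all $t\ge0$ and all $x_1\ne x_2$ in $\Lambda$.
   Context: $(\cdot,\cdot)$ is the standard Euclidean inner product on $\mathbb{R}^d$. Each point of $\Lambda$ is a non-interacting point particle with initial position $x$ and initial velocity $v(x)$. *)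

(* Defs.v *)
From HB Require Import structures.
From mathcomp Require Import all_boot all_order all_algebra.
From mathcomp Require Import all_classical all_reals all_analysis.
Set Implicit Arguments. Unset Strict Implicit. Unset Printing Implicit Defensive.
Import Order.TTheory GRing.Theory Num.Theory.
Import numFieldNormedType.Exports.
Local Open Scope classical_set_scope.
Local Open Scope ring_scope.

Definition dot (R : realType) (d : nat) (u w : 'rV[R]_d) : R :=
  \sum_(i < d) u ord0 i * w ord0 i.

(* f' is the derivative of f on [0, +oo): for every t >= 0, the difference
   quotient h^-1 (f (t + h) - f t) tends to f' t as h -> 0, h <> 0, with
   t + h >= 0 (so at t = 0 this is the right derivative). *)
Definition deriv_nonneg (R : realType) (d : nat) (f f' : R -> 'rV[R]_d) : Prop :=
  forall t : R, 0 <= t ->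
    (fun h : R => h^-1 *: (f (t + h) - f t))
      @ within [set h : R | 0 <= t + h] (0 : R)^' --> f' t.

Definition is_solution (R : realType) (d : nat) (F : 'rV[R]_d -> 'rV[R]_d)
  (x0 v0 : 'rV[R]_d) (y : R -> 'rV[R]_d) : Prop :=
  y 0 = x0 /\
  exists y' : R -> 'rV[R]_d,
    [/\ deriv_nonneg y y', deriv_nonneg y' (F \o y) & y' 0 = v0].

(* Main.v *)
Require Import Defs.
From HB Require Import structures.
From mathcomp Require Import all_boot all_order all_algebra.
From mathcomp Require Import all_classical all_reals all_analysis.
Import Order.TTheory GRing.Theory Num.Theory.
Import numFieldNormedType.Exports.
Local Open Scope classical_set_scope.
Local Open Scope ring_scope.

Section Aux.
Context {R : realType}.

Definition sderiv (g g' : R -> R) : Prop :=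
  forall t : R, 0 <= t ->
    (fun h : R => h^-1 * (g (t + h) - g t))
      @ within [set h : R | 0 <= t + h] (0 : R)^' --> g' t.

Lemma id_cvg0 (t : R) :
  (fun h : R => h) @ within [set h : R | 0 <= t + h] (0 : R)^' --> (0 : R).
Proof.
apply: cvg_within_filter; apply: cvg_within_filter; exact: cvg_id.
Qed.

Lemma within_to_right (t : R) (q : R -> R) (l : R) : 0 <= t ->
  q @ within [set h : R | 0 <= t + h] (0 : R)^' --> l -> q @ (0:R)^'+ --> l.
Proof.
move=> t0 H P /H HP.
have {}HP : nbhs (0:R) (fun y => y != 0 -> 0 <= t + y -> P (q y)) by exact: HP.
change (nbhs (0:R) (fun y => 0 < y -> P (q y))).
apply: filterS HP => h Hh hpos; apply: Hh; first by rewrite gt_eqF.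
by apply: addr_ge0 => //; exact: ltW.
Qed.

Lemma within_to_dnbhs (t : R) (q : R -> R) (l : R) : 0 < t ->
  q @ within [set h : R | 0 <= t + h] (0 : R)^' --> l -> q @ (0:R)^' --> l.
Proof.
move=> t0 H P /H HP.
have {}HP : nbhs (0:R) (fun y => y != 0 -> 0 <= t + y -> P (q y)) by exact: HP.
change (nbhs (0:R) (fun y => y != 0 -> P (q y))).
have HA : \forall h \near (0:R), 0 <= t + h.
  apply/nbhs_ballP; exists t => //= h; rewrite /ball /= sub0r normrN.
  rewrite ltr_norml => /andP[h1 _].
  by rewrite -(opprK t) addrC subr_ge0 ltW.
by apply: filterS2 HA HP => h Ah Hh hne; apply: Hh.
Qed.


Lemma cvg_bigsum {T : Type} (F : set_system T) {FF : Filter F} (I : Type)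
  (s : seq I) (f : I -> T -> R) (l : I -> R) :
  (forall i, f i @ F --> l i) ->
  (fun x => \sum_(i <- s) f i x) @ F --> \sum_(i <- s) l i.
Proof.
move=> H; elim: s => [|a s IH].
  rewrite big_nil; under eq_fun do rewrite big_nil; exact: cvg_cst.
rewrite big_cons; under eq_fun do rewrite big_cons.
exact: cvgD.
Qed.

Lemma sderiv_cont (g g' : R -> R) : sderiv g g' ->
  forall t, 0 <= t ->
  (fun h => g (t + h)) @ within [set h : R | 0 <= t + h] (0 : R)^' --> g t.
Proof.
move=> Hg t t0.
have E : (fun h => g (t + h)) = (fun h => h * (h^-1 * (g (t + h) - g t)) + g t).
  apply: funext => h; have [->|hn0] := eqVneq h 0.
    by rewrite addr0 mul0r add0r.
  by rewrite mulrA mulfV // mul1r subrK.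
rewrite E.
suff H : (fun h => h * (h^-1 * (g (t + h) - g t)) + g t)
   @ within [set h : R | 0 <= t + h] (0 : R)^' --> 0 * g' t + g t.
  by rewrite mul0r add0r in H.
apply: cvgD; last exact: cvg_cst.
apply: cvgM; [exact: id_cvg0 | exact: Hg].
Qed.

Lemma sderiv_mono (g g' : R -> R) : sderiv g g' ->
  (forall t, 0 <= t -> 0 <= g' t) -> forall a b, 0 <= a -> a <= b -> g a <= g b.
Proof.
move=> Hg Hpos a b a0 ab.
have Hd : forall x, 0 < x ->
    (fun h : R => h^-1 *: ((g \o shift x) (h *: 1) - g x)) @ (0:R)^' --> g' x.
  move=> x x0.
  have -> : (fun h : R => h^-1 *: ((g \o shift x) (h *: 1) - g x)) =
            (fun h => h^-1 * (g (x + h) - g x)).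
    by apply: funext => h /=; rewrite [_%:A]mulr1 (addrC h).
  exact: (@within_to_dnbhs x _ _ x0 (Hg x (ltW x0))).
have Hder : forall x, 0 < x -> derivable g x 1.
  by move=> x x0; apply/cvg_ex; exists (g' x); exact: Hd.
have Hval : forall x, 0 < x -> derive1 g x = g' x.
  by move=> x x0; rewrite derive1E /derive; apply: cvg_lim => //; exact: Hd.
apply: (@ger0_derive1_ndecry R g 0) => //.
- by move=> x; rewrite in_itv /= andbT => x0; exact: Hder.
- move=> x; rewrite in_itv /= andbT => x0; rewrite Hval //.
  by apply: Hpos; exact: ltW.
- apply/continuous_within_itvcyP; split.
    move=> x; rewrite in_itv /= andbT => x0.
    by apply: differentiable_continuous; apply/derivable1_diffP; exact: Hder.
  have H0 := @within_to_right 0 _ _ (lexx 0) (@sderiv_cont g g' Hg 0 (lexx 0)).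
  move: H0; rewrite (_ : (fun h => g (0 + h)) = g) //.
  by apply: funext => h; rewrite add0r.
Qed.

Context {d : nat}.
Implicit Types u w : 'rV[R]_d.

Lemma dotC u w : dot u w = dot w u.
Proof. by apply: eq_bigr => i _; rewrite mulrC. Qed.

Lemma dotDl u1 u2 w : dot (u1 + u2) w = dot u1 w + dot u2 w.
Proof. by rewrite /dot -big_split; apply: eq_bigr => i _; rewrite mxE mulrDl. Qed.

Lemma dotNl u w : dot (- u) w = - dot u w.
Proof. by rewrite /dot -sumrN; apply: eq_bigr => i _; rewrite mxE mulNr. Qed.

Lemma dotBl u1 u2 w : dot (u1 - u2) w = dot u1 w - dot u2 w.
Proof. by rewrite dotDl dotNl. Qed.

Lemma dotBr u w1 w2 : dot u (w1 - w2) = dot u w1 - dot u w2.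
Proof. by rewrite dotC dotBl !(dotC u). Qed.

Lemma dotZl (a : R) u w : dot (a *: u) w = a * dot u w.
Proof. by rewrite /dot mulr_sumr; apply: eq_bigr => i _; rewrite mxE mulrA. Qed.

Lemma dotZr (a : R) u w : dot u (a *: w) = a * dot u w.
Proof. by rewrite dotC dotZl dotC. Qed.

Lemma dot_ge0 u : 0 <= dot u u.
Proof. by apply: sumr_ge0 => i _; rewrite -expr2 sqr_ge0. Qed.

Lemma dot_gt0 u : u != 0 -> 0 < dot u u.
Proof.
move=> un0; rewrite lt_def dot_ge0 andbT; apply: contra un0 => /eqP H.
apply/eqP/rowP => i; rewrite mxE.
have H0 : forall j : 'I_d, true -> 0 <= u ord0 j * u ord0 j.
  by move=> j _; rewrite -expr2; exact: sqr_ge0.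
have /eqP := (@psumr_eq0P _ _ _ _ H0 H i isT).
by rewrite mulf_eq0 orbb => /eqP.
Qed.

Lemma cvg_dot {T : Type} {F : set_system T} {FF : Filter F}
  {a b : T -> 'rV[R]_d} {u w} :
  a @ F --> u -> b @ F --> w -> (fun x => dot (a x) (b x)) @ F --> dot u w.
Proof.
move=> Ha Hb; apply: cvg_bigsum => i; apply: cvgM.
  exact: (@continuous_cvg _ _ _ F FF a (fun M : 'rV[R]_d => M ord0 i) u
     (@coord_continuous R 1 d ord0 i u) Ha).
exact: (@continuous_cvg _ _ _ F FF b (fun M : 'rV[R]_d => M ord0 i) w
     (@coord_continuous R 1 d ord0 i w) Hb).
Qed.

Lemma deriv_cont (f f' : R -> 'rV[R]_d) : deriv_nonneg f f' ->
  forall t, 0 <= t ->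
  (fun h => f (t + h)) @ within [set h : R | 0 <= t + h] (0 : R)^' --> f t.
Proof.
move=> Hf t t0.
have E : (fun h => f (t + h)) = (fun h => h *: (h^-1 *: (f (t + h) - f t)) + f t).
  apply: funext => h; have [->|hn0] := eqVneq h 0.
    by rewrite addr0 scale0r add0r.
  by rewrite scalerA mulfV // scale1r subrK.
rewrite E.
suff H : (fun h => h *: (h^-1 *: (f (t + h) - f t)) + f t)
   @ within [set h : R | 0 <= t + h] (0 : R)^' --> 0 *: f' t + f t.
  by rewrite scale0r add0r in H.
apply: cvgD; last exact: cvg_cst.
apply: cvgZ; [exact: id_cvg0 | exact: Hf].
Qed.

Lemma deriv_dot (f f' g g' : R -> 'rV[R]_d) :
  deriv_nonneg f f' -> deriv_nonneg g g' ->
  sderiv (fun t => dot (f t) (g t)) (fun t => dot (f' t) (g t) + dot (f t) (g' t)).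
Proof.
move=> Hf Hg t t0.
have E : (fun h => h^-1 * (dot (f (t + h)) (g (t + h)) - dot (f t) (g t))) =
  (fun h => dot (h^-1 *: (f (t + h) - f t)) (g (t + h)) +
            dot (f t) (h^-1 *: (g (t + h) - g t))).
  apply: funext => h; rewrite dotZl dotZr -mulrDr dotBl dotBr; congr (_ * _).
  by rewrite addrA subrK.
rewrite E; apply: cvgD.
  exact: (cvg_dot (Hf t t0) (@deriv_cont g g' Hg t t0)).
exact: (cvg_dot (cvg_cst (f t)) (Hg t t0)).
Qed.

Lemma deriv_sub (f f' g g' : R -> 'rV[R]_d) :
  deriv_nonneg f f' -> deriv_nonneg g g' ->
  deriv_nonneg (fun s => f s - g s) (fun s => f' s - g' s).
Proof.
move=> Hf Hg t t0.
have -> : (fun h : R => h^-1 *: ((f (t + h) - g (t + h)) - (f t - g t))) =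
  (fun h => h^-1 *: (f (t + h) - f t) - h^-1 *: (g (t + h) - g t)).
  apply: funext => h; rewrite -scalerBr; congr (_ *: _).
  by rewrite !opprD addrACA.
exact: cvgB (Hf t t0) (Hg t t0).
Qed.

End Aux.

Theorem theorem4 (R : realType) (d : nat) (Lam : set 'rV[R]_d)
  (F : 'rV[R]_d -> 'rV[R]_d) (v : 'rV[R]_d -> 'rV[R]_d)
  (y : 'rV[R]_d -> R -> 'rV[R]_d) :
  (exists U : set 'rV[R]_d, [/\ open U, connected U & Lam = closure U]) ->
  (forall x, Lam x ->
     is_solution F x (v x) (y x) /\
     (forall z, is_solution F x (v x) z -> forall t, 0 <= t -> z t = y x t)) ->
  (forall a b : 'rV[R]_d, 0 <= dot (F b - F a) (b - a)) ->
  (forall x1 x2, Lam x1 -> Lam x2 -> 0 <= dot (v x2 - v x1) (x2 - x1)) ->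
  forall (t : R) (x1 x2 : 'rV[R]_d), 0 <= t -> Lam x1 -> Lam x2 -> x1 != x2 ->
    y x1 t != y x2 t.
Proof.
move=> _ Hsol HF Hv t x1 x2 t0 L1 L2 x12.
have [[y10 [y1' [Hy1 Hy1' y1'0]]] _] := Hsol x1 L1.
have [[y20 [y2' [Hy2 Hy2' y2'0]]] _] := Hsol x2 L2.
pose w := fun s => y x2 s - y x1 s.
pose w' := fun s => y2' s - y1' s.
pose w'' := fun s => (F \o y x2) s - (F \o y x1) s.
have Hw : deriv_nonneg w w' := @deriv_sub R d _ _ _ _ Hy2 Hy1.
have Hw' : deriv_nonneg w' w'' := @deriv_sub R d _ _ _ _ Hy2' Hy1'.
have Hpsi := @deriv_dot R d _ _ _ _ Hw Hw'.
have psi_mono := @sderiv_mono R _ _ Hpsi.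
have psi0 : 0 <= dot (w 0) (w' 0).
  by rewrite /w /w' y10 y20 y1'0 y2'0 dotC; exact: Hv.
have psi_ge : forall s, 0 <= s -> 0 <= dot (w s) (w' s).
  move=> s s0; apply: (le_trans psi0); apply: psi_mono => // r r0.
  apply: addr_ge0; first exact: dot_ge0.
  by rewrite /w /w'' /= dotC; exact: HF.
have Hphi := @deriv_dot R d _ _ _ _ Hw Hw.
have phi_le := @sderiv_mono R _ _ Hphi.
have : dot (w 0) (w 0) <= dot (w t) (w t).
  apply: phi_le => // r r0; rewrite dotC; apply: addr_ge0; exact: psi_ge.
have phi0 : 0 < dot (w 0) (w 0).
  by apply: dot_gt0; rewrite /w y10 y20 subr_eq0 eq_sym.
apply: contraTneq => E.
by rewrite /w E subrr -ltNge (le_lt_trans _ phi0) // /dot big1 // => i _; rewrite mxE mul0r.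
Qed.
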